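(* Let $G$ be a connected graph with minimum degree $\delta(G)\ge 2$. If $G$ has an independent $\Gamma$-set, then $\Gamma(G)=\Gamma_{\rm cer}(G)$.
   Context: All graphs are finite and simple; $\delta(G)$ is the minimum degree. A set $D\subseteq V_G$ is a dominating set of $G$ if every vertex of $V_G-D$ has a neighbor in $D$; $\Gamma(G)$ is the maximum cardinality of a minimal (with respect to inclusion) dominating set, and a $\Gamma$-set is a minimal dominating set of cardinality $\Gamma(G)$. A set $D$ is a certified dominating set of $G$ if $D$ is dominating and every vertex of $D$ has either zero or at least two neighbors in $V_G-D$; $\Gamma_{\rm cer}(G)$ is the maximum cardinality of a minimal (with respect to inclusion) certified dominating set. *)

(* Defs.v *)
From mathcomp Require Import all_boot.
Set Implicit Arguments. Unset Strict Implicit. Unset Printing Implicit Defensive.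

(* A finite simple graph: vertex type T : finType, adjacency e : rel T,
   assumed symmetric and irreflexive (hypotheses of the theorem). *)

Definition open_nbhd (T : finType) (e : rel T) (v : T) : {set T} :=
  [set u | e v u].

Definition deg (T : finType) (e : rel T) (v : T) : nat := #|open_nbhd e v|.

Definition dominating (T : finType) (e : rel T) (D : {set T}) : bool :=
  [forall x, (x \notin D) ==> [exists y in D, e x y]].

Definition minimal_dominating (T : finType) (e : rel T) (D : {set T}) : bool :=
  dominating e D && [forall D' : {set T}, (D' \proper D) ==> ~~ dominating e D'].

Definition certified_dominating (T : finType) (e : rel T) (D : {set T}) : bool :=
  dominating e D &&
  [forall v in D, #|open_nbhd e v :\: D| != 1].

Definition minimal_certified_dominating (T : finType) (e : rel T) (D : {set T}) : bool :=
  certified_dominating e D &&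
  [forall D' : {set T}, (D' \proper D) ==> ~~ certified_dominating e D'].

Definition Gamma (T : finType) (e : rel T) : nat :=
  \max_(D : {set T} | minimal_dominating e D) #|D|.

Definition Gamma_cer (T : finType) (e : rel T) : nat :=
  \max_(D : {set T} | minimal_certified_dominating e D) #|D|.

Definition independent (T : finType) (e : rel T) (D : {set T}) : bool :=
  [forall x in D, forall y in D, ~~ e x y].

Definition Gamma_set (T : finType) (e : rel T) (D : {set T}) : bool :=
  minimal_dominating e D && (#|D| == Gamma e).

Definition connected_graph (T : finType) (e : rel T) : Prop :=
  (0 < #|T|) /\ forall x y : T, connect e x y.

(* Main.v *)
Require Import Defs.
From mathcomp Require Import all_boot.
From mathcomp Require Import zify.
Set Implicit Arguments. Unset Strict Implicit. Unset Printing Implicit Defensive.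

Section Aux.
Variables (T : finType) (e : rel T).
Hypothesis e_sym : symmetric e.
Hypothesis e_irr : irreflexive e.
Hypothesis mindeg : forall v : T, 2 <= deg e v.

Notation N := (open_nbhd e).

Lemma inN u y : (y \in N u) = e u y.
Proof. by rewrite /open_nbhd inE. Qed.

Lemma domP (D : {set T}) :
  reflect (forall x, x \notin D -> exists2 y, y \in D & e x y) (dominating e D).
Proof.
apply: (iffP forallP) => H x.
  by move=> Hx; have /implyP/(_ Hx)/existsP[y /andP[Hy Hxy]] := H x; exists y.
apply/implyP => Hx; have [y Hy Hxy] := H x Hx; apply/existsP; exists y.
by rewrite Hy.
Qed.

Lemma card_mono u (D D' : {set T}) : D' \subset D ->
  #|N u :\: D| != 1 -> 0 < #|N u :\: D| -> #|N u :\: D'| != 1.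
Proof.
move=> sub H1 H0.
have : #|N u :\: D| <= #|N u :\: D'| by apply/subset_leq_card/setDS.
lia.
Qed.

Lemma key D : minimal_certified_dominating e D -> minimal_dominating e D.
Proof.
case/andP=> /andP[Hdom Hcert] /forallP Hmin.
have step1 : forall u, u \in D -> 0 < #|N u :\: D|.
  move=> b bD; rewrite lt0n; apply/negP => /eqP Hb0.
  have HbN : forall y, e b y -> y \in D.
    move=> y Hy; apply/negPn/negP => yD.
    have : y \in N b :\: D by rewrite inE yD inN.
    by move/eqP: (Hb0); rewrite cards_eq0 => /eqP ->; rewrite inE.
  pose A := [set u in D | 0 < #|N u :\: D|].
  pose B2 := [set u in D | (#|N u :\: D| == 0) && [forall a in A, ~~ e u a]].
  pose indep (S : {set T}) := [forall x in S, forall y in S, ~~ e x y].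
  have P0 : (set0 \subset B2) && indep set0.
    by rewrite sub0set /=; apply/forall_inP => x; rewrite inE.
  case: (@arg_maxnP _ set0 (fun S => (S \subset B2) && indep S) (fun S => #|S|) P0).
  move=> S /andP[SB2 Sind] Smax.
  have indP : forall x y, x \in S -> y \in S -> ~~ e x y.
    by move=> x y xS yS; move/forall_inP: Sind => /(_ x xS)/forall_inP/(_ y yS).
  have B2P : forall s, s \in S -> s \in D /\ #|N s :\: D| = 0 /\ (forall a, a \in A -> ~~ e s a).
    move=> s sS; have := subsetP SB2 s sS; rewrite inE => /andP[sD /andP[/eqP H1 /forall_inP H2]].
    by split.
  pose T' := A :|: S.
  have sNT : forall s y, s \in S -> e s y -> y \notin T'.
    move=> s y sS esy; rewrite inE negb_or; apply/andP; split.
      by apply/negP => yA; have [_ [_ H]] := B2P s sS; move: (H y yA); rewrite esy.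
    by apply/negP => yS; move: (indP s y sS yS); rewrite esy.
  have TD : T' \subset D.
    apply/subsetP => x; rewrite inE => /orP[|xS]; first by rewrite inE => /andP[].
    by have [] := B2P x xS.
  have Tprop : T' \proper D.
    apply/properP; split => //.
    case: (boolP (b \in S)) => bS.
      have : 0 < #|N b| by have := mindeg b; rewrite /deg; lia.
      rewrite card_gt0 => /set0Pn[y]; rewrite inN => eby.
      by exists y; [apply: HbN | apply: sNT eby].
    exists b => //; rewrite inE negb_or bS andbT inE bD /=; apply/negP.
    by rewrite Hb0.
  have Tcert : certified_dominating e T'.
    apply/andP; split.
      apply/domP => x xT.
      case: (boolP (x \in D)) => xD; last first.
        have [y yD exy] := (elimT (domP D) Hdom) x xD.
        exists y => //; rewrite inE; apply/orP; left; rewrite inE yD /=.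
        by rewrite card_gt0; apply/set0Pn; exists x; rewrite inE xD inN e_sym.
      case: (boolP [exists a in A, e x a]) => [/exists_inP[a aA exa]|noA].
        by exists a => //; rewrite inE aA.
      have xA : x \notin A by move: xT; rewrite inE negb_or => /andP[].
      have xS : x \notin S by move: xT; rewrite inE negb_or => /andP[].
      have xB2 : x \in B2.
        rewrite inE xD /=; apply/andP; split.
          by move: xA; rewrite inE xD /= lt0n negbK.
        by apply/forall_inP => a aA; apply/negP => exa; move/negP: noA; apply; apply/exists_inP; exists a.
      case: (boolP [exists s in S, e x s]) => [/exists_inP[s sS exs]|noS].
        by exists s => //; rewrite inE sS orbT.
      have noS' : forall s, s \in S -> ~~ e x s.
        by move=> s sS; apply/negP => exs; move/negP: noS; apply; apply/exists_inP; exists s.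
      have : #|x |: S| <= #|S|.
        apply: Smax; apply/andP; split.
          by apply/subsetP => y; rewrite in_setU1 => /orP[/eqP->//|yS]; apply: (subsetP SB2).
        apply/forall_inP => y; rewrite in_setU1 => /orP[/eqP->|yS]; apply/forall_inP => z;
          rewrite in_setU1 => /orP[/eqP->|zS].
        - by rewrite e_irr.
        - by apply: noS'.
        - by rewrite e_sym; apply: noS'.
        - by apply: indP.
      by rewrite cardsU1 xS /= add1n ltnn.
    apply/forall_inP => u; rewrite inE => /orP[uA|uS].
      move: uA; rewrite inE => /andP[uD u0].
      by apply: card_mono TD _ u0; move/forall_inP: Hcert; apply.
    have : N u \subset N u :\: T'.
      by apply/subsetP => y; rewrite inN => euy; rewrite inE inN euy andbT; apply: sNT euy.
    move/subset_leq_card; have := mindeg u; rewrite /deg; lia.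
  by move: (Hmin T'); rewrite Tprop Tcert.
apply/andP; split => //; apply/forallP => D'; apply/implyP => Hp.
apply/negP => Hd; move: (Hmin D'); rewrite Hp /= /certified_dominating Hd /=.
move/negP; apply; apply/forall_inP => u uD'.
have sub : D' \subset D by apply: proper_sub.
have uD := subsetP sub u uD'.
by apply: card_mono sub _ (step1 u uD); move/forall_inP: Hcert; apply.
Qed.

End Aux.

Theorem theorem3p5 (T : finType) (e : rel T)
  (e_sym : symmetric e) (e_irr : irreflexive e)
  (G_conn : connected_graph e)
  (G_mindeg : forall v : T, 2 <= deg e v)
  (G_indep : exists D : {set T}, Gamma_set e D && independent e D) :
  Gamma e = Gamma_cer e.
Proof.
have [D /andP[/andP[Hmd /eqP HG] Hind]] := G_indep.
have Hmc : minimal_certified_dominating e D.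
  move: Hmd => /andP[Hdom /forallP Hmin].
  apply/andP; split.
    apply/andP; split => //; apply/forall_inP => v vD.
    have : open_nbhd e v \subset open_nbhd e v :\: D.
      apply/subsetP => y; rewrite inN => evy; rewrite inE inN evy andbT.
      apply/negP => yD; move/forall_inP: Hind => /(_ v vD)/forall_inP/(_ y yD).
      by rewrite evy.
    move/subset_leq_card; have := G_mindeg v; rewrite /deg; lia.
  apply/forallP => D'; apply/implyP => Hp; apply/negP => /andP[Hd _].
  by move: (Hmin D'); rewrite Hp Hd.
apply/anti_leq/andP; split.
  by rewrite -HG; apply: (@leq_bigmax_cond _ (minimal_certified_dominating e) (fun D : {set T} => #|D|) _ Hmc).
apply/bigmax_leqP => D' HD'.
by apply: (@leq_bigmax_cond _ (minimal_dominating e) (fun D : {set T} => #|D|)); apply: key HD'.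
Qed.
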